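(* Consider a fair allocation instance with agents $a_1,\dots,a_n$, a finite set $M$ of $m$ indivisible goods, binary XOS valuations $v_1,\dots,v_n$, and entitlements $b_1,\dots,b_n>0$ with $\sum_{i}b_i=1$. Rename the agents so that $\frac{\lceil \mathsf{APS}_1/2\rceil}{b_1}\le \frac{\lceil \mathsf{APS}_2/2\rceil}{b_2}\le\cdots\le\frac{\lceil \mathsf{APS}_n/2\rceil}{b_n}$. Run the following procedure: set $R\gets M$; for $i=1,\dots,n$ in this order, if $v_i(R)\ge\lceil \mathsf{APS}_i/2\rceil$, give $a_i$ a bundle $A_i\subseteq R$ with $v_i(A_i)=|A_i|=\lceil \mathsf{APS}_i/2\rceil$ and set $R\gets R\setminus A_i$ (otherwise the procedure fails); finally allocate the goods remaining in $R$ arbitrarily. Then the procedure never fails, i.e. at every step $i$ such a bundle $A_i$ exists, and the resulting allocation $A$ of $M$ satisfies $v_i(A_i)\ge \frac12\mathsf{APS}_i$ for every agent $a_i$; in particular a $\frac12$-APS allocation always exists.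
   Context: A valuation $v:2^M\to\mathbb{R}_{\ge0}$ is XOS if there is a finite collection of additive functions $\{\ell_t\}_t$ with nonnegative item values such that $v(S)=\max_t\ell_t(S)$ for all $S\subseteq M$. It has binary marginals if $v(\varnothing)=0$ and $v(S\cup\{g\})-v(S)\in\{0,1\}$ for all $S\subseteq M$, $g\in M$; ''binary XOS'' means XOS with binary marginals. An allocation is a partition $(A_1,\dots,A_n)$ of $M$ with $A_i$ given to $a_i$. With $\mathcal{P}=\{p\in\mathbb{R}^m_{\ge0}:\sum_{g\in M}p_g=1\}$ and $p(S)=\sum_{g\in S}p_g$, the AnyPrice share of $a_i$ is $\mathsf{APS}_i=\min_{p\in\mathcal{P}}\max_{S\subseteq M,\ p(S)\le b_i}v_i(S)$. An allocation is $\alpha$-APS if $v_i(A_i)\ge\alpha\,\mathsf{APS}_i$ for all $i$. *)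

(* Defs.v *)
From HB Require Import structures.
From mathcomp Require Import all_boot all_order all_algebra.
From mathcomp Require Import reals.
Set Implicit Arguments. Unset Strict Implicit. Unset Printing Implicit Defensive.
Import Order.TTheory GRing.Theory Num.Theory.
Local Open Scope ring_scope.

Section Defs.
Variables (R : realType) (M : finType).

Definition price (p : M -> R) (S : {set M}) : R := \sum_(g in S) p g.

Definition XOS (v : {set M} -> R) : Prop :=
  exists (k : nat) (w : 'I_k -> M -> R),
    [/\ (0 < k)%N, (forall t g, 0 <= w t g) &
        forall S : {set M}, v S = \big[Num.max/0]_(t < k) price (w t) S].

Definition binary_marginals (v : {set M} -> R) : Prop :=
  v set0 = 0 /\
  forall (S : {set M}) (g : M), (v (g |: S) - v S == 0) || (v (g |: S) - v S == 1).

Definition binary_XOS (v : {set M} -> R) : Prop := XOS v /\ binary_marginals v.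

Definition price_vector (p : M -> R) : Prop :=
  (forall g, 0 <= p g) /\ \sum_g p g = 1.

(* max_{S : p(S) <= b} v(S)  (the empty set is always feasible; values >= 0) *)
Definition best_affordable (v : {set M} -> R) (b : R) (p : M -> R) : R :=
  \big[Num.max/0]_(S : {set M} | price p S <= b) v S.

(* AnyPrice share: min over price vectors (rendered as the infimum of the set
   of attained values, which is a minimum here) *)
Definition APS (v : {set M} -> R) (b : R) : R :=
  inf (fun y : R => exists p : M -> R, price_vector p /\ y = best_affordable v b p).

Definition half_aps_ceil (v : {set M} -> R) (b : R) : R :=
  (Num.ceil (APS v b / 2))%:~R.

Definition allocation (n : nat) (A : 'I_n -> {set M}) : Prop :=
  (forall i j : 'I_n, i != j -> [disjoint A i & A j]) /\
  \bigcup_(i < n) A i = [set: M].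

Definition good_bundle (v : {set M} -> R) (c : R) (B : {set M}) : Prop :=
  v B = (#|B|)%:R /\ (#|B|)%:R = c.

End Defs.

(* Main.v *)
Require Import Defs.
From HB Require Import structures.
From mathcomp Require Import all_boot all_order all_algebra.
From mathcomp Require Import reals zify ring lra boolp.
From mathcomp Require classical_sets.
Import Order.TTheory GRing.Theory Num.Theory.
Local Open Scope ring_scope.
Set Implicit Arguments. Unset Strict Implicit.

Section L.
Variables (R : realType) (M : finType).
Implicit Types (v : {set M} -> R) (S T : {set M}).

Lemma price_ge0 (w : M -> R) S : (forall g, 0 <= w g) -> 0 <= price w S.
Proof. by move=> h; apply: sumr_ge0. Qed.

Lemma price_split (w : M -> R) S T : S \subset T -> price w T = price w S + price w (T :\: S).
Proof.
by move=> sST; rewrite /price (big_setID S) /= (setIidPr sST).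
Qed.

Lemma price_sub (w : M -> R) S T : (forall g, 0 <= w g) -> S \subset T -> price w S <= price w T.
Proof. by move=> h sST; rewrite (price_split w sST) lerDl price_ge0. Qed.

Lemma XOS_clause v : XOS v -> forall S, exists w : M -> R,
  [/\ forall g, 0 <= w g, price w S = v S & forall T, price w T <= v T].
Proof.
move=> [k [w [k0 w0 hv]]] S.
have [t _ ht] := eq_bigmax (Ordinal k0) xpredT (fun t => price (w t) S) isT
   (fun t _ => price_ge0 S (w0 t)).
exists (w t); split => //; first by rewrite hv ht.
by move=> T; rewrite hv (bigD1 t) //= le_max lexx.
Qed.

Lemma XOS_mono v : XOS v -> forall S T, S \subset T -> v S <= v T.
Proof.
move=> hv S T sST; have [w [w0 <- h]] := XOS_clause hv S.
apply: le_trans (h T); exact: price_sub.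
Qed.

Lemma XOS_subadd v : XOS v -> forall S T, v (S :|: T) <= v S + v T.
Proof.
move=> hv S T; have [w [w0 <- h]] := XOS_clause hv (S :|: T).
rewrite (price_split w (subsetUl S T)); apply: lerD; first exact: h.
apply: le_trans (h T); apply: price_sub => //.
by apply/subsetP => x; rewrite !inE; case: (x \in S) => //= /andP[].
Qed.

Lemma XOS_ge0 v : XOS v -> forall S, 0 <= v S.
Proof. by move=> hv S; have [w [w0 <- _]] := XOS_clause hv S; apply: price_ge0. Qed.

Lemma bm_step v : binary_marginals v -> forall S g, v (g |: S) = v S \/ v (g |: S) = v S + 1.
Proof.
move=> [_ h] S g; case/orP: (h S g) => /eqP e; [left|right].
  by apply/eqP; rewrite -subr_eq0 e.
by rewrite -e addrC subrK.
Qed.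

Lemma vnat v : binary_marginals v -> forall S, exists m : nat, v S = m%:R /\ (m <= #|S|)%N.
Proof.
move=> hb S; have [c] := ubnP #|S|; elim: c S => // c IH S hc.
case: (set_0Vmem S) => [->|[g gS]]; first by exists 0%N; rewrite (proj1 hb).
have e : S = g |: (S :\ g) by rewrite setD1K.
have hlt : (#|S :\ g| < c)%N by move: hc; rewrite (cardsD1 g S) gS add1n ltnS.
have [m [hm lem]] := IH (S :\ g) hlt.
have cS : #|S| = (#|S :\ g|).+1 by rewrite (cardsD1 g S) gS.
rewrite e; case: (bm_step hb (S :\ g) g) => ->.
  by exists m; split => //; rewrite -e cS (leq_trans lem).
by exists m.+1; split; [rewrite hm -natr1 | rewrite -e cS ltnS].
Qed.

Lemma lt_int_le (a b : int) : (a%:~R : R) < b%:~R -> (a%:~R:R) <= b%:~R - 1.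
Proof. rewrite ltr_int => h. have -> : (1:R) = (1:int)%:~R by []. rewrite -intrB ler_int. lia. Qed.

Lemma bundle v : binary_XOS v -> forall c : int, 0 <= c -> forall S, (c%:~R : R) <= v S ->
  exists B : {set M}, B \subset S /\ good_bundle v c%:~R B.
Proof.
move=> [hx hb] c c0 S; have [n] := ubnP #|S|; elim: n S => // n IH S hn hS.
case: (boolP [exists g in S, (c%:~R : R) <= v (S :\ g)]).
  case/existsP => g /andP[gS h].
  have hlt : (#|S :\ g| < n)%N by move: hn; rewrite (cardsD1 g S) gS add1n ltnS.
  have [B [sB gB]] := IH _ hlt h; exists B; split => //.
  exact: subset_trans sB (subD1set S g).
rewrite negb_exists => /forallP hall.
have [m [hm lem]] := vnat hb S.
exists S; split => //.
case: (set_0Vmem S) => [S0|[g0 g0S]].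
  move: hS; rewrite S0 (proj1 hb) => hc.
  have -> : c = 0 by apply/eqP; rewrite eq_le c0 andbT -(ler_int R).
  by rewrite /good_bundle cards0 (proj1 hb).
have key : forall g, g \in S -> v (S :\ g) = v S - 1 /\ v S = c%:~R.
  move=> g gS; have := hall g; rewrite gS /= -ltNge => hlt.
  have [m' [hm' _]] := vnat hb (S :\ g).
  have hle : v (S :\ g) <= c%:~R - 1 by rewrite hm'; apply: (lt_int_le (a:=m'%:Z)); exact: (eq_ind _ (fun x => x < _) hlt _ hm').
  have eS : S = g |: (S :\ g) by rewrite setD1K.
  have hup : v S <= v (S :\ g) + 1.
    by rewrite {1}eS; case: (bm_step hb (S :\ g) g) => ->; rewrite ?lerDl.
  have hvc : v S = c%:~R by apply/eqP; rewrite eq_le hS andbT (le_trans hup) // -lerBrDr.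
  split => //; apply/eqP; rewrite eq_le; apply/andP; split.
    by rewrite hvc.
  by rewrite lerBlDr.
have [_ hc] := key g0 g0S.
have [w [w0 hwS hw]] := XOS_clause hx S.
have w1 : forall g, g \in S -> 1 <= w g.
  move=> g gS; have [hd _] := key g gS.
  have := hw (S :\ g); rewrite hd -hwS /price (big_setD1 g gS) /=.
  move=> h; lra.
have hge : (#|S|%:R : R) <= v S.
  rewrite -hwS /price -sum1_card natr_sum; apply: ler_sum => g gS; exact: w1.
have hSm : v S = #|S|%:R.
  apply/eqP; rewrite eq_le hge andbT hm ler_nat; exact: lem.
by split => //; rewrite -hSm.
Qed.

Lemma ba_ge0 v b p : 0 <= best_affordable v b p.
Proof. exact: bigmax_ge_id. Qed.

Lemma ba_le v b p x : 0 <= x -> (forall S, price p S <= b -> v S <= x) -> best_affordable v b p <= x.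
Proof. by move=> x0 h; apply: bigmax_le. Qed.

Lemma APS_ge0 v b : 0 <= APS v b.
Proof.
rewrite /APS; set E := (fun y : R => _).
case: (pselect (exists y, E y)) => [[y Ey]|nE].
  apply: lb_le_inf; first by exists y.
  by move=> z [p [_ ->]]; apply: ba_ge0.
have -> : E = @classical_sets.set0 R by apply/funext => y; apply/propext; split => // Ey; apply: nE; exists y.
by rewrite inf0.
Qed.

Lemma APS_le v b p : price_vector p -> APS v b <= best_affordable v b p.
Proof.
move=> hp; apply: ge_inf; last by exists p.
by exists 0 => z [q [_ ->]]; apply: ba_ge0.
Qed.

Lemma hac_ge v b : APS v b / 2 <= half_aps_ceil v b.
Proof. exact: Num.Theory.ceil_ge. Qed.

Lemma hac_lt v b : half_aps_ceil v b - 1 < APS v b / 2.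
Proof. rewrite /half_aps_ceil; have -> : (1:R) = (1:int)%:~R by []. by rewrite -intrB; apply: ceilB1_lt. Qed.

Lemma hac_int v b : exists z : int, 0 <= z /\ half_aps_ceil v b = z%:~R.
Proof.
exists (Num.ceil (APS v b / 2)); split => //.
rewrite ceil_ge0; apply: (lt_le_trans (y := 0)); first by rewrite ltrN10.
by rewrite divr_ge0 // APS_ge0.
Qed.

Lemma lt_nat_int (m : nat) (z : int) : (m%:R : R) < z%:~R -> (m%:R : R) <= z%:~R - 1.
Proof. exact: (@lt_int_le m%:Z z). Qed.

Lemma step (n : nat) (v : 'I_n -> {set M} -> R) (b : 'I_n -> R)
 (hv : forall i, binary_XOS (v i)) (hb : forall i, 0 < b i) (hs : \sum_(i < n) b i = 1)
 (hord : forall i j : 'I_n, (i <= j)%N ->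
     half_aps_ceil (v i) (b i) / b i <= half_aps_ceil (v j) (b j) / b j)
 (k : 'I_n) (A : 'I_n -> {set M})
 (hA : forall j : 'I_n, (j < k)%N -> good_bundle (v j) (half_aps_ceil (v j) (b j)) (A j)) :
 half_aps_ceil (v k) (b k) <= v k (~: \bigcup_(j < n | (j < k)%N) A j).
Proof.
set c := fun j => half_aps_ceil (v j) (b j).
rewrite -/(c k).
set D := \bigcup_(j < n | (j < k)%N) A j.
rewrite leNgt; apply/negP => hlt.
have [z [z0 hz]] := hac_int (v k) (b k).
have [hx hbm] := hv k.
have [m [hm _]] := vnat hbm (~: D).
have hRem : v k (~: D) <= c k - 1.
  by rewrite hm /c hz; apply: lt_nat_int; rewrite -hz -hm.
have ck_pos : 0 < c k := le_lt_trans (XOS_ge0 hx _) hlt.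
have ck1 : 1 <= c k.
  have := @lt_int_le 0 z; rewrite -hz /= => h; have := h ck_pos; lra.
have hqa : c k - 1 < APS (v k) (b k) / 2 := hac_lt _ _.
have cj0 : forall j : 'I_n, (j < k)%N -> 0 <= c j.
  by move=> j jk; have [_ e] := hA j jk; rewrite /c -e; apply: ler0n.
pose q := fun g => \sum_(j < n | (j < k)%N) (g \in A j)%:R * (b j / c j).
have q0 : forall g, 0 <= q g.
  move=> g; apply: sumr_ge0 => j jk; apply: mulr_ge0; first exact: ler0n.
  by apply: divr_ge0; [exact: ltW | exact: cj0].
have qD : forall g, g \in D -> b k / c k <= q g.
  move=> g /bigcupP [j jk gA]; rewrite /q (bigD1 j) //= gA mul1r.
  rewrite -[X in X <= _]addr0; apply: lerD; last first.
    apply: sumr_ge0 => i /andP[ik _]; apply: mulr_ge0; first exact: ler0n.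
    by apply: divr_ge0; [exact: ltW | exact: cj0].
  have cjpos : 0 < c j.
    have [_ e] := hA j jk; rewrite /c -e ltr0n card_gt0; apply/set0Pn; by exists g.
  have := hord j k (ltnW jk); rewrite -/(c j) -/(c k) => h.
  have bj := hb j; have bk := hb k.
  rewrite ler_pdivrMr // mulrAC ler_pdivlMr //.
  move: h; rewrite ler_pdivrMr // mulrAC ler_pdivlMr // => h.
  by rewrite mulrC [b j * _]mulrC.
pose Q := \sum_g q g.
have Q0 : 0 <= Q by apply: sumr_ge0 => g _; exact: q0.
have Qlt : Q < 1.
  have e : Q = \sum_(j < n | (j < k)%N) \sum_g (g \in A j)%:R * (b j / c j).
    by rewrite /Q /q exchange_big.
  have h1 : Q <= \sum_(j < n | (j < k)%N) b j.
    rewrite e; apply: ler_sum => j jk.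
    rewrite -mulr_suml.
    have -> : \sum_g ((g \in A j)%:R : R) = #|A j|%:R.
      rewrite -sum1_card natr_sum [RHS]big_mkcond /=; apply: eq_bigr => g _.
      by case: (g \in A j).
    have [_ ->] := hA j jk.
    rewrite -/(c j); case: (eqVneq (c j) 0) => [->|cj]; first by rewrite mul0r ltW.
    by rewrite mulrC divfK.
  have h2 : \sum_(j < n | (j < k)%N) b j + b k <= 1.
    rewrite -hs [X in _ <= X](bigID (fun j : 'I_n => (j < k)%N)) /= lerD2l.
    rewrite (bigD1 k) ?ltnn //= lerDl; apply: sumr_ge0 => i _; exact: ltW.
  have := hb k; lra.
have hsplit : forall S, v k S <= #|S :&: D|%:R + v k (~: D).
  move=> S; apply: le_trans (_ : v k ((S :&: D) :|: (S :\: D)) <= _).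
    apply: XOS_mono => //; apply/subsetP => g gS; rewrite !inE gS.
    by case: (g \in D).
  apply: le_trans (XOS_subadd hx _ _) _; apply: lerD.
    have [m' [-> lm']] := vnat hbm (S :&: D); by rewrite ler_nat.
  apply: XOS_mono => //; apply/subsetP => g; rewrite !inE => /andP[].
  by move=> ->.
case: (ltrgt0P Q) => [Qpos|Qneg|Qz]; last first.
-
  have D0 : D = set0.
    apply/setP => g; rewrite inE; apply/negP => gD.
    have := qD g gD; have : q g <= Q.
      by rewrite /Q (bigD1 g) //= lerDl; apply: sumr_ge0 => i _; exact: q0.
    have : 0 < b k / c k by apply: divr_gt0.
    rewrite Qz; lra.
  have hAPS : APS (v k) (b k) <= c k - 1.
    case: (pickP (@predT M)) => [g0 _ | Mnone].
      have Mpos : (0 < #|M|)%N by apply/card_gt0P; exists g0.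
      pose p := fun _ : M => (#|M|%:R : R)^-1.
      have hp : price_vector p.
        split; first by move=> g; rewrite /p invr_ge0 ler0n.
        rewrite /p sumr_const; have -> : #|(xpredT : pred M)| = #|M| by apply: eq_card. set x := ((#|M|%:R : R)^-1); rewrite -mulr_natl /x mulfV // pnatr_eq0 -lt0n Mpos //.
      apply: le_trans (APS_le _ _ hp) _.
      apply: ba_le; first lra.
      move=> S _; have := hsplit S; have -> : S :&: D = set0 by rewrite D0 setI0.
      rewrite cards0 add0r => h.
      exact: le_trans h hRem.
    have -> : APS (v k) (b k) = 0.
      rewrite /APS; set E := (fun y : R => _).
      have -> : E = @classical_sets.set0 R; last by rewrite inf0.
      apply/funext => y; apply/propext; split => [[p [[_ hp] _]]|//].
      move: hp; rewrite big_pred0; first by move/eqP; rewrite eq_sym oner_eq0.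
      by move=> g; have := Mnone g.
    lra.
  lra.
- lra.
pose p := fun g => q g / Q.
have p0 : forall g, 0 <= p g by move=> g; apply: divr_ge0 => //; exact: q0.
have hp : price_vector p.
  by split => //; rewrite /p -mulr_suml divff // gt_eqF.
have hAPS : APS (v k) (b k) <= 2 * c k - 2.
  apply: le_trans (APS_le _ _ hp) _.
  apply: ba_le; first lra.
  move=> S hS; set T := S :&: D.
  have h1 : #|T|%:R * (b k / c k / Q) <= b k.
    apply: le_trans hS; apply: le_trans (price_sub p0 (subsetIl S D)).
    rewrite mulr_natl -sumr_const; apply: ler_sum => g; rewrite inE => /andP[_ gD].
    rewrite /p; apply: ler_wpM2r; [by rewrite invr_ge0 | exact: qD].
  have h2 : #|T|%:R < c k.
    rewrite ltNge; apply/negP => ht.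
    have hpos : 0 <= b k / c k / Q.
      by apply: divr_ge0; [apply: divr_ge0; [apply: ltW; exact: hb | apply: ltW] | apply: ltW].
    have := le_trans (ler_wpM2r hpos ht) h1.
    have ckne : c k != 0 by rewrite gt_eqF.
    have Qne : Q != 0 by rewrite gt_eqF.
    have -> : c k * (b k / c k / Q) = b k / Q.
      by field; apply/andP; split; [exact: Qne | exact: ckne].
    rewrite ler_pdivrMr // => h3.
    have := hb k; nra.
  have hT : #|T|%:R <= c k - 1 by move: h2; rewrite /c hz; apply: lt_nat_int.
  have := hsplit S; rewrite -/T; lra.
lra.
Qed.
End L.

Unset Implicit Arguments.
Set Strict Implicit.

Theorem theorem1 (R : realType) (M : finType) (n : nat)
    (v : 'I_n -> {set M} -> R) (b : 'I_n -> R) :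
  (forall i, binary_XOS (v i)) ->
  (forall i, 0 < b i) ->
  \sum_(i < n) b i = 1 ->
  (forall i j : 'I_n, (i <= j)%N ->
     half_aps_ceil (v i) (b i) / b i <= half_aps_ceil (v j) (b j) / b j) ->
  (forall (k : 'I_n) (A : 'I_n -> {set M}),
     (forall j : 'I_n, (j < k)%N -> good_bundle (v j) (half_aps_ceil (v j) (b j)) (A j)) ->
     (forall j1 j2 : 'I_n, (j1 < k)%N -> (j2 < k)%N -> j1 != j2 ->
        [disjoint A j1 & A j2]) ->
     let Rem := ~: \bigcup_(j < n | (j < k)%N) A j in
     half_aps_ceil (v k) (b k) <= v k Rem /\
     exists B : {set M}, B \subset Rem /\
       good_bundle (v k) (half_aps_ceil (v k) (b k)) B) /\
  (forall (B A : 'I_n -> {set M}),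
     (forall i, good_bundle (v i) (half_aps_ceil (v i) (b i)) (B i)) ->
     (forall i, B i \subset A i) ->
     allocation A ->
     forall i, v i (A i) >= APS (v i) (b i) / 2) /\
  (exists A : 'I_n -> {set M}, allocation A /\
     forall i, v i (A i) >= 1 / 2 * APS (v i) (b i)).
Proof.
move=> hv hb hs hord.
have P1 : forall (k : 'I_n) (A : 'I_n -> {set M}),
     (forall j : 'I_n, (j < k)%N -> good_bundle (v j) (half_aps_ceil (v j) (b j)) (A j)) ->
     let Rem := ~: \bigcup_(j < n | (j < k)%N) A j in
     half_aps_ceil (v k) (b k) <= v k Rem /\
     exists B : {set M}, B \subset Rem /\
       good_bundle (v k) (half_aps_ceil (v k) (b k)) B.
  move=> k A hA Rem.
  have h := step hv hb hs hord hA; split => //.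
  have [z [z0 hz]] := hac_int (v k) (b k).
  rewrite hz in h *. apply: (bundle (hv k) z0). exact: h.
have P2 : forall (B A : 'I_n -> {set M}),
     (forall i, good_bundle (v i) (half_aps_ceil (v i) (b i)) (B i)) ->
     (forall i, B i \subset A i) ->
     forall i, v i (A i) >= APS (v i) (b i) / 2.
  move=> B A hB hBA i; have [e1 e2] := hB i.
  apply: le_trans (hac_ge _ _) _; rewrite -e2 -e1.
  exact: XOS_mono (proj1 (hv i)) _ _ (hBA i).
split; first by move=> k A hA _; exact: P1.
split; first by move=> B A hB hBA _; exact: P2.
have build : forall k, (k <= n)%N -> exists A : 'I_n -> {set M},
   (forall j : 'I_n, (j < k)%N -> good_bundle (v j) (half_aps_ceil (v j) (b j)) (A j)) /\
   (forall j1 j2 : 'I_n, (j1 < k)%N -> (j2 < k)%N -> j1 != j2 -> [disjoint A j1 & A j2]).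
  elim => [_|k IH kn].
    by exists (fun _ => set0); split.
  have [A [hA hd]] := IH (ltnW kn).
  pose kk : 'I_n := Ordinal kn.
  have [_ [B [sB gB]]] := P1 kk A hA.
  pose D := \bigcup_(j < n | (j < kk)%N) A j.
  have dB : forall j : 'I_n, (j < k)%N -> [disjoint B & A j].
    move=> j jk; rewrite disjoints_subset; apply: subset_trans sB _.
    by rewrite setCS; apply: (bigcup_sup j).
  exists (fun j => if j == kk then B else A j); split.
    move=> j; rewrite ltnS; case: eqVneq => [-> //|jne] jk; apply: hA.
    by rewrite ltn_neqAle jk andbT; apply: contraNneq jne => e; apply/eqP/val_inj.
  move=> j1 j2; rewrite !ltnS => j1k j2k jne.
  have lt_of : forall j : 'I_n, j != kk -> (j <= k)%N -> (j < k)%N.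
    by move=> j jn jk; rewrite ltn_neqAle jk andbT; apply: contraNneq jn => e; apply/eqP/val_inj.
  case: eqVneq => [e1|n1]; case: eqVneq => [e2|n2].
  - by move: jne; rewrite e1 e2 eqxx.
  - exact: dB (lt_of _ n2 j2k).
  - by rewrite disjoint_sym; exact: dB (lt_of _ n1 j1k).
  - exact: hd (lt_of _ n1 j1k) (lt_of _ n2 j2k) jne.
have [A [hA hd]] := build n (leqnn n).
have npos : (0 < n)%N.
  case: (posnP n) => // n0; move: hs; rewrite big_pred0.
    by move/eqP; rewrite eq_sym oner_eq0.
  by move=> i; have := ltn_ord i; move: (nat_of_ord i) => x; rewrite n0.
pose i0 : 'I_n := Ordinal npos.
pose U := \bigcup_(j < n) A j.
pose A' := fun j => if j == i0 then A j :|: ~: U else A j.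
have sAA : forall j, A j \subset A' j.
  by move=> j; rewrite /A'; case: eqVneq => // _; apply: subsetUl.
have alloc : allocation A'.
  split.
    have key : forall j1 j2 : 'I_n, j1 == i0 -> j1 != j2 -> [disjoint A' j1 & A' j2].
      move=> j1 j2 e jne; rewrite /A' e; have -> : (j2 == i0) = false.
        by apply/negbTE; move/eqP: e => e; rewrite -e eq_sym.
      rewrite disjoints_subset subUset; apply/andP; split.
        by rewrite -disjoints_subset; exact: hd (ltn_ord _) (ltn_ord _) jne.
      by rewrite setCS; apply: (bigcup_sup j2).
    move=> j1 j2 jne; case: (boolP (j1 == i0)) => e1; first exact: key.
    case: (boolP (j2 == i0)) => e2.
      by rewrite disjoint_sym; apply: key => //; rewrite eq_sym.
    rewrite /A' (negbTE e1) (negbTE e2); exact: hd (ltn_ord _) (ltn_ord _) jne.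
  apply/setP => g; rewrite inE; apply/bigcupP.
  case: (boolP (g \in U)) => [/bigcupP [j _ gA]|gn].
    by exists j => //; apply: (subsetP (sAA j)).
  by exists i0 => //; rewrite /A' eqxx !inE gn orbT.
exists A'; split => // i.
have := P2 A A' (fun i => hA i (ltn_ord i)) sAA i.
lra.
Qed.
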